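(* Let $m\ge 1$, and let $(\Gamma,\tau)$ be a translation quiver such that for any arrow $x\to y$ in $\Gamma$, $x$ is projective whenever $y$ is projective. Then the translation quiver $(\Gamma^m,\tau^m)$ has the same property: for any arrow $x\to y$ in $\Gamma^m$, $x$ is projective in $(\Gamma^m,\tau^m)$ whenever $y$ is projective in $(\Gamma^m,\tau^m)$.
   Context: A translation quiver is a pair $(\Gamma,\tau)$ with the following properties: $\Gamma$ is a locally finite quiver (multiple arrows allowed) with vertex set $\Gamma_0$; $\tau:\Gamma_0'\to\Gamma_0$ is an injective map defined on a subset $\Gamma_0'\subseteq\Gamma_0$; and for all $X\in\Gamma_0$ and $Y\in\Gamma_0'$ the number of arrows $X\to Y$ equals the number of arrows $\tau(Y)\to X$. Vertices where the translation is not defined are called projective; in $(\Gamma^m,\tau^m)$, a vertex is projective if $\tau^m$ is not defined on it. A path $x_0\to x_1\to\cdots\to x_m$ in $\Gamma$ is sectional if $\tau x_{i+1}\ne x_{i-1}$ for every $i=1,\dots,m-1$ for which $\tau x_{i+1}$ is defined. The quiver $\Gamma^m$ has the same vertices as $\Gamma$ and one arrow $x\to y$ for each sectional path of length $m$ from $x$ to $y$ in $\Gamma$. The map $\tau^m$ is the $m$-fold composite of $\tau$, defined where this composite is defined. Under the hypothesis, $(\Gamma^m,\tau^m)$ is a translation quiver. *)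

(* Defs.v *)
From Stdlib Require Import List.
Import ListNotations.

(* A quiver: vertex type V, arrow type A, source and target maps.
   A translation is a partial map tau : V -> option V
   (tau x = None  <->  x is projective). *)

Fixpoint is_path {V A : Type} (src tgt : A -> V) (x : V) (p : list A) (y : V)
  : Prop :=
  match p with
  | [] => x = y
  | a :: p' => src a = x /\ is_path src tgt (tgt a) p' y
  end.

(* A path a_1 a_2 ... a_m with a_i : x_{i-1} -> x_i is sectional iff
   tau x_{i+1} <> x_{i-1} whenever tau x_{i+1} is defined, i.e. for each
   consecutive pair of arrows a_i, a_{i+1}: tau (tgt a_{i+1}) <> Some (src a_i). *)
Fixpoint sectional {V A : Type} (src tgt : A -> V) (tau : V -> option V)
  (p : list A) : Prop :=
  match p with
  | a :: ((b :: _) as p') =>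
      tau (tgt b) <> Some (src a) /\ sectional src tgt tau p'
  | _ => True
  end.

(* Arrows x -> y in Gamma^m correspond to sectional paths of length m. *)
Definition arrow_pow {V A : Type} (src tgt : A -> V) (tau : V -> option V)
  (m : nat) (x y : V) : Prop :=
  exists p : list A, length p = m /\ is_path src tgt x p y /\
                     sectional src tgt tau p.

Fixpoint tau_iter {V : Type} (tau : V -> option V) (m : nat) (x : V)
  : option V :=
  match m with
  | 0 => Some x
  | S k => match tau_iter tau k x with
           | Some z => tau z
           | None => None
           end
  end.

Definition projective {V : Type} (tau : V -> option V) (x : V) : Prop :=
  tau x = None.

Definition bijective_map {X Y : Type} (f : X -> Y) : Prop :=
  exists g : Y -> X, (forall x, g (f x) = x) /\ (forall y, f (g y) = y).

Definition arrows_between {V A : Type} (src tgt : A -> V) (X Y : V) : Type :=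
  { a : A | src a = X /\ tgt a = Y }.

Definition is_translation_quiver {V A : Type} (src tgt : A -> V)
  (tau : V -> option V) : Prop :=
  (forall x : V, exists l : list A,
      forall a : A, (src a = x \/ tgt a = x) -> In a l) /\
  (forall y1 y2 z : V, tau y1 = Some z -> tau y2 = Some z -> y1 = y2) /\
  (forall X Y Z : V, tau Y = Some Z ->
     exists f : arrows_between src tgt X Y -> arrows_between src tgt Z X,
       bijective_map f).

(* Main.v *)
Require Import Defs.
From Stdlib Require Import List.
Import ListNotations.

Lemma tau_iter_S {V : Type} (tau : V -> option V) (k : nat) (x : V) :
  tau_iter tau (S k) x = match tau x with Some z => tau_iter tau k z | None => None end.
Proof.
  induction k as [|k IH]; simpl.
  - destruct (tau x); reflexivity.
  - simpl in IH. rewrite IH. destruct (tau x); reflexivity.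
Qed.

Lemma arrow_step (V A : Type) (src tgt : A -> V) (tau : V -> option V)
  (HTQ : is_translation_quiver src tgt tau)
  (Hproj : forall a : A, projective tau (tgt a) -> projective tau (src a)) :
  forall k (a : A), tau_iter tau k (src a) <> None -> tau_iter tau k (tgt a) <> None.
Proof.
  destruct HTQ as [_ [_ Hmesh]].
  induction k as [|k IH]; intros a H.
  - simpl. discriminate.
  - rewrite tau_iter_S in *.
    destruct (tau (src a)) as [u'|] eqn:Hu; [|contradiction].
    destruct (tau (tgt a)) as [v'|] eqn:Hv.
    2: { exfalso. unfold projective in Hproj. rewrite (Hproj a Hv) in Hu. discriminate. }
    destruct (Hmesh (src a) (tgt a) v' Hv) as [f _].
    destruct (f (exist _ a (conj eq_refl eq_refl))) as [b [Hb1 Hb2]].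
    destruct (Hmesh v' (src a) u' Hu) as [g _].
    destruct (g (exist _ b (conj Hb1 Hb2))) as [c [Hc1 Hc2]].
    specialize (IH c). rewrite Hc1, Hc2 in IH. exact (IH H).
Qed.

Lemma path_step (V A : Type) (src tgt : A -> V) (tau : V -> option V)
  (HTQ : is_translation_quiver src tgt tau)
  (Hproj : forall a : A, projective tau (tgt a) -> projective tau (src a)) :
  forall k p x y, is_path src tgt x p y ->
    tau_iter tau k x <> None -> tau_iter tau k y <> None.
Proof.
  intros k p. induction p as [|a p IH]; intros x y Hp H; simpl in Hp.
  - subst; exact H.
  - destruct Hp as [Ha Hp]. apply (IH (tgt a) y Hp).
    apply (arrow_step V A src tgt tau HTQ Hproj). rewrite Ha. exact H.
Qed.

Theorem proposition6p3 (V A : Type) (src tgt : A -> V) (tau : V -> option V)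
  (m : nat) (Hm : 1 <= m)
  (HTQ : is_translation_quiver src tgt tau)
  (Hproj : forall a : A, projective tau (tgt a) -> projective tau (src a)) :
  forall x y : V, arrow_pow src tgt tau m x y ->
    projective (tau_iter tau m) y -> projective (tau_iter tau m) x.
Proof.
  intros x y [p [_ [Hp _]]] Hy. unfold projective in *.
  destruct (tau_iter tau m x) eqn:E; [|reflexivity].
  exfalso. apply (path_step V A src tgt tau HTQ Hproj m p x y Hp).
  - rewrite E. discriminate.
  - exact Hy.
Qed.
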